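(* For every $x\in X(l_1,\dots,l_n,l_\infty)$ and every $g\in J_n$, the border thickness of $gx$ equals the border thickness of $x$.
   Context: Cactus group: $J_n$ is the group generated by $s_{p,q}$, $1\le p<q\le n$, subject to the relations $s_{p,q}^2=e$; $s_{p,q}s_{p',q'}=s_{p',q'}s_{p,q}$ if $[p,q]$ and $[p',q']$ are disjoint; $s_{p,q}s_{p',q'}s_{p,q}=s_{p+q-q',p+q-p'}$ if $p\le p'<q'\le q$. Arc diagrams: fix nonnegative integers $l_1,\dots,l_n,l_\infty$. On the boundary circle of a closed disc place $n+1$ marked positions: position $0$ (occupied by $z_\infty$) and positions $1,\dots,n$ following it clockwise. An arc diagram is a bijective assignment of labels $z_1,\dots,z_n$ to positions $1,\dots,n$ together with a finite collection of simple arcs in the disc, pairwise disjoint except at endpoints, each joining two distinct marked points, such that $z_j$ is an endpoint of exactly $l_j$ arcs ($j\in\{1,\dots,n,\infty\}$; $l_j$ is the valence). Parallel arcs are allowed; diagrams are up to isotopy, equivalently determined by the labelling and the number of arcs between each pair of marked points. $X(l_1,\dots,l_n,l_\infty)$ is the set of such diagrams. Action: $s_{p,q}$ ($1\le p<q\le n$) acts by cutting off positions $p,\dots,q$ with a chord $\ell$ (arcs isotoped to cross $\ell$ at most once), reflecting that region by the reflection reversing $\ell$ (label at position $p+t$ goes to position $q-t$, crossing points on $\ell$ reversed), leaving the rest unchanged and reconnecting arcs at $\ell$. Words act right to left; this is an action of $J_n$. Border thickness: the minimum, over the $n+1$ cyclically adjacent pairs of positions $(0,1),(1,2),\dots,(n-1,n),(n,0)$,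 of the number of arcs joining the two points of the pair. *)

(* Defs.v *)
From mathcomp Require Import all_boot.
Set Implicit Arguments. Unset Strict Implicit. Unset Printing Implicit Defensive.

(* Marked positions on the boundary circle: 'I_n.+1, position 0 carries
   z_oo, positions 1..n follow clockwise.  Labels are also encoded in
   'I_n.+1: label 0 = z_oo, label j (1 <= j <= n) = z_j. *)

Record diagram (n : nat) := Diagram {
  lab  : 'I_n.+1 -> 'I_n.+1;            (* position -> label *)
  arcs : 'I_n.+1 -> 'I_n.+1 -> nat       (* number of arcs between two positions *)
}.

(* valence attached to a label: label 0 is z_oo (valence linf),
   label j+1 is z_{j+1} (valence l j, with l : 'I_n -> nat indexing l_1..l_n). *)
Definition valence n (l : 'I_n -> nat) (linf : nat) (j : 'I_n.+1) : nat :=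
  match unlift ord0 j with Some j' => l j' | None => linf end.

Definition is_arc_diagram n (l : 'I_n -> nat) (linf : nat) (d : diagram n) : Prop :=
  [/\ (injective (lab d) /\ lab d ord0 = ord0),
      (forall a b : 'I_n.+1, arcs d a b = arcs d b a),
      (forall a : 'I_n.+1, arcs d a a = 0),
      (* arcs pairwise disjoint except at endpoints: no interleaving endpoints *)
      (forall a c b e : 'I_n.+1, a < c -> c < b -> b < e ->
          arcs d a b = 0 \/ arcs d c e = 0)
    & (forall k : 'I_n.+1, \sum_(b < n.+1) arcs d k b = valence l linf (lab d k))].

Section Action.
Variables (n p q : nat).

Definition inside (k : 'I_n.+1) : bool := (p <= k) && (k <= q).

Definition refl (k : 'I_n.+1) : 'I_n.+1 := if inside k then inord (p + q - k) else k.

Definition ins : seq 'I_n.+1 := [seq inord k | k <- iota p (q - p).+1].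
(* outside positions in the order met along the boundary from the endpoint of
   the chord l between p-1 and p, i.e. p-1, p-2, ..., 0, n, n-1, ..., q+1 *)
Definition outs : seq 'I_n.+1 :=
  [seq inord k | k <- rev (iota 0 p) ++ rev (iota q.+1 (n - q))].

(* arcs crossing the chord l, listed (with multiplicity) in the order of their
   crossing points along l (from the p-1|p end to the q|q+1 end); each is
   recorded as (inside endpoint, outside endpoint). *)
Definition cross (d : diagram n) : seq ('I_n.+1 * 'I_n.+1) :=
  flatten [seq nseq (arcs d io.1 io.2) io | io <- [seq (i, o) | i <- ins, o <- outs]].

(* after reflecting, the inside half-arc reaching crossing point m+1-j (moved to
   crossing point j, and with reflected inside endpoint) is reconnected with the
   outside half-arc at crossing point j *)
Definition newcross (d : diagram n) : seq ('I_n.+1 * 'I_n.+1) :=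
  zip (map refl (rev (unzip1 (cross d)))) (unzip2 (cross d)).

Definition act_s (d : diagram n) : diagram n :=
  Diagram (fun k => lab d (refl k))
    (fun a b =>
       if inside a && inside b then arcs d (refl a) (refl b)
       else if ~~ inside a && ~~ inside b then arcs d a b
       else if inside a then count_mem (a, b) (newcross d)
       else count_mem (b, a) (newcross d)).
End Action.

(* a word s_{p1,q1} s_{p2,q2} ... s_{pk,qk} in the generators of J_n,
   given as a list of pairs; acting right to left *)
Definition gen_ok n (pq : nat * nat) : bool := (0 < pq.1 < pq.2) && (pq.2 <= n).

Definition act_word n (w : seq (nat * nat)) (d : diagram n) : diagram n :=
  foldr (fun pq d' => act_s pq.1 pq.2 d') d w.

Definition border_thickness n (d : diagram n) : nat :=
  foldr minn (arcs d ord_max ord0)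
    [seq arcs d (inord k) (inord (k.+1 %% n.+1)) | k <- iota 0 n.+1].

(* Main.v *)
Require Import Defs.
From mathcomp Require Import all_boot.
From mathcomp Require Import zify.
Set Implicit Arguments. Unset Strict Implicit. Unset Printing Implicit Defensive.

Lemma foldr_min_le (x0 : nat) (s : seq nat) y : y \in x0 :: s -> foldr minn x0 s <= y.
Proof.
elim: s y => [|h s IH] y /=; first by rewrite inE => /eqP ->.
rewrite !inE => /orP[/eqP->|/orP[/eqP->|H]].
- by rewrite geq_min (IH x0) ?inE ?eqxx ?orbT.
- by rewrite geq_min leqnn.
- by rewrite geq_min (IH y) ?inE ?H ?orbT.
Qed.

Lemma foldr_min_ex (x0 : nat) (s : seq nat) : foldr minn x0 s \in x0 :: s.
Proof.
elim: s => [|h s IH] /=; first by rewrite inE.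
rewrite /minn; case: ifP => _; first by rewrite !inE eqxx orbT.
move: IH; rewrite !inE => /orP[->|->] //; by rewrite !orbT.
Qed.

Lemma foldr_min_ge (x0 : nat) (s : seq nat) z : z <= x0 -> all (fun y => z <= y) s -> z <= foldr minn x0 s.
Proof.
move=> H; elim: s => [|h s IH] //= /andP[H1 H2].
by rewrite leq_min H1 IH.
Qed.

Lemma pairwise_mem (T : eqType) (R : rel T) (l : seq T) u v :
  reflexive R -> pairwise R l -> u \in l -> v \in l -> R u v || R v u.
Proof.
move=> Rr; elim: l => [|h l IH] //= /andP[/allP Ha Hp].
rewrite !inE => /orP[/eqP->|Hu] /orP[/eqP->|Hv].
- by rewrite Rr.
- by rewrite Ha.
- by rewrite Ha ?orbT.
- exact: IH.
Qed.

Lemma all_zip (S T : Type) (P : pred S) (Q : pred T) s t :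
  all P s -> all Q t -> all (fun u => P u.1 && Q u.2) (zip s t).
Proof.
elim: s t => [|x s IH] [|y t] //= /andP[-> Hs] /andP[-> Ht] /=.
exact: IH.
Qed.

Lemma pairwise_zip (S T : Type) (r1 : rel S) (r2 : rel T) s t :
  pairwise r1 s -> pairwise r2 t -> pairwise (fun u v => r1 u.1 v.1 && r2 u.2 v.2) (zip s t).
Proof.
elim: s t => [|x s IH] [|y t] //= /andP[Hx Hs] /andP[Hy Ht].
by rewrite IH // (all_zip Hx Hy).
Qed.

Lemma count_zip_pre (S T : eqType) (x : S) (y : T) a c X Y :
  minn a c <= count_mem (x, y) (zip (nseq c x ++ X) (nseq a y ++ Y)).
Proof.
elim: a c => [|a IH] [|c] /=; rewrite ?min0n ?minn0 //.
by rewrite eqxx add1n minnSS ltnS IH.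
Qed.

Lemma count_zip_suf (S T : eqType) (x : S) (y : T) a c X Y :
  size (X ++ nseq c x) = size (Y ++ nseq a y) ->
  minn a c <= count_mem (x, y) (zip (X ++ nseq c x) (Y ++ nseq a y)).
Proof.
move=> Hs; rewrite -count_rev rev_zip // !rev_cat !rev_nseq.
exact: count_zip_pre.
Qed.

Lemma count_flat (T : eqType) (f : T -> nat) (s : seq T) z :
  count_mem z (flatten [seq nseq (f w) w | w <- s]) = f z * count_mem z s.
Proof.
elim: s => [|h s IH] /=; first by rewrite muln0.
rewrite count_cat count_nseq IH mulnDr; case: eqP => [->|Hne] /=; rewrite ?eqxx ?mul1n ?mul0n ?muln1 //.
by move/eqP/negbTE: Hne => ->; rewrite muln0 mul0n.
Qed.

Lemma mem_flat (T : eqType) (f : T -> nat) (s : seq T) z :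
  z \in flatten [seq nseq (f w) w | w <- s] -> (z \in s) && (0 < f z).
Proof.
elim: s => [|h s IH] //=; rewrite mem_cat mem_nseq inE => /orP[/andP[H /eqP->]|/IH/andP[-> ->]].
  by rewrite eqxx H.
by rewrite orbT.
Qed.

Lemma pairwise_flat (T : eqType) (R : rel T) (f : T -> nat) (s : seq T) :
  reflexive R -> pairwise R s -> pairwise R (flatten [seq nseq (f w) w | w <- s]).
Proof.
move=> Rr; elim: s => [|h s IH] //= /andP[/allP Ha Hp].
rewrite pairwise_cat IH // andbT; apply/andP; split.
  apply/allrelP => u v; rewrite !mem_nseq => /andP[_ /eqP ->].
  elim: (s) Ha => [|h' s' IH'] //= Ha'.
  rewrite mem_cat mem_nseq => /orP[/andP[_ /eqP->]|]; first by apply: Ha'; rewrite inE eqxx.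
  apply: IH' => w Hw; apply: Ha'; by rewrite inE Hw orbT.
elim: (f h) => [|k IHk] //=.
rewrite IHk andbT; apply/allP => w; rewrite mem_nseq => /andP[_ /eqP->]; exact: Rr.
Qed.

Definition Inv n (d : diagram n) : Prop :=
  (forall a b, arcs d a b = arcs d b a) /\
  (forall a c b e : 'I_n.+1, a < c -> c < b -> b < e -> arcs d a b = 0 \/ arcs d c e = 0).

Lemma NC n (d : diagram n) (u v s t : 'I_n.+1) : Inv d -> 0 < arcs d u v -> 0 < arcs d s t ->
 ((minn u v < minn s t) /\ (minn s t < maxn u v) /\ (maxn u v < maxn s t)) \/
 ((minn s t < minn u v) /\ (minn u v < maxn s t) /\ (maxn s t < maxn u v)) -> False.
Proof.
case=> Hs Hn Huv Hst.
have key : forall a c b e : 'I_n.+1, a < c -> c < b -> b < e -> 0 < arcs d a b -> 0 < arcs d c e -> False.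
  move=> a c b e h1 h2 h3 h4 h5; case: (Hn a c b e h1 h2 h3) => h; lia.
have Hvu : 0 < arcs d v u by rewrite Hs.
have Hts : 0 < arcs d t s by rewrite Hs.
move=> Hc.
case: Hc => Hc.
all: case: (ltngtP u v) => huv; last by lia.
all: case: (ltngtP s t) => hst; last by lia.
all: first [ by apply: (key u s v t); lia | by apply: (key s u t v); lia
  | by apply: (key u t v s); lia | by apply: (key t u s v); lia
  | by apply: (key v s u t); lia | by apply: (key s v t u); lia
  | by apply: (key v t u s); lia | by apply: (key t v s u); lia ].
Qed.


Lemma inside_inord n p q k : k <= n -> @inside n p q (inord k) = (p <= k <= q).
Proof. by move=> H; rewrite /inside inordK. Qed.

Lemma mem_ins n p q (x : 'I_n.+1) : p <= q -> q <= n -> x \in ins n p q -> p <= x <= q.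
Proof. move=> Hpq Hq /mapP[k]; rewrite mem_iota => Hk ->; rewrite inordK; lia. Qed.

Lemma mem_outs n p q (x : 'I_n.+1) : p <= q -> q <= n -> x \in outs n p q -> (x < p) || (q < x).
Proof.
move=> Hpq Hq /mapP[k]; rewrite mem_cat !mem_rev !mem_iota => Hk ->; rewrite inordK; lia.
Qed.

Lemma refl_in n p q (x : 'I_n.+1) : q <= n -> inside p q x ->
  val (refl p q x) = p + q - x /\ inside p q (refl p q x) /\ refl p q (refl p q x) = x.
Proof.
move=> Hq Hx; have Hv : val (refl p q x) = p + q - x.
  by rewrite /refl Hx /= inordK //; move: Hx; rewrite /inside; lia.
split=> //.
have Hi : inside p q (refl p q x) by move: Hx; rewrite /inside Hv; lia.
split=> //; apply: val_inj; rewrite {1}/refl Hi /= inordK Hv; move: Hx; rewrite /inside; lia.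
Qed.

Lemma refl_out n p q (x : 'I_n.+1) : ~~ inside p q x -> refl p q x = x.
Proof. by move=> H; rewrite /refl (negbTE H). Qed.

Lemma pairwise_rev (T : Type) (r : rel T) s : pairwise r (rev s) = pairwise (fun x y => r y x) s.
Proof.
elim: s => [|x s IH] //=; rewrite rev_cons pairwise_rcons IH all_rev; congr andb.
Qed.

Lemma pairwise_iota_in (R : rel nat) m k :
  (forall a b, m <= a -> a < b -> b < m + k -> R a b) -> pairwise R (iota m k).
Proof.
move=> H; apply: (sub_in_pairwise (P := mem (iota m k)) (r := ltn)).
- move=> a b; rewrite !mem_iota => Ha Hb Hab; apply: H; lia.
- by apply/allP.
- rewrite -(sorted_pairwise ltn_trans); exact: iota_ltn_sorted.
Qed.

Definition ro n p (o : 'I_n.+1) : nat := if o < p then p.-1 - o else p + n - o.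
Definition lexlt n p (e e' : 'I_n.+1 * 'I_n.+1) : bool :=
  (e.1 < e'.1) || ((e.1 == e'.1) && (ro p e.2 < ro p e'.2)).
Definition lexle n p (e e' : 'I_n.+1 * 'I_n.+1) : bool :=
  (e.1 < e'.1) || ((e.1 == e'.1) && (ro p e.2 <= ro p e'.2)).

Lemma pw_ins n p q : p <= q -> q <= n -> pairwise (fun x y : 'I_n.+1 => x < y) (ins n p q).
Proof.
move=> Hpq Hq; rewrite /ins pairwise_map.
apply: (sub_in_pairwise (P := mem (iota p (q - p).+1)) (r := ltn)).
- move=> a b; rewrite !mem_iota /relpre /= => Ha Hb Hab; rewrite !inordK; lia.
- by apply/allP.
- apply: pairwise_iota_in; lia.
Qed.

Lemma pw_outs n p q : 0 < p -> p <= q -> q <= n -> pairwise (fun x y : 'I_n.+1 => ro p x < ro p y) (outs n p q).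
Proof.
move=> Hp Hpq Hq; rewrite /outs pairwise_map.
apply: (sub_in_pairwise (P := [pred k | k <= n])
   (r := fun a b => (if a < p then p.-1 - a else p + n - a) < (if b < p then p.-1 - b else p + n - b))).
- move=> a b; rewrite !inE /relpre /ro /= => Ha Hb Hab; rewrite !inordK //; lia.
- apply/allP => k; rewrite mem_cat !mem_rev !mem_iota inE; lia.
- rewrite pairwise_cat !pairwise_rev; apply/and3P; split.
  + apply/allrelP => a b; rewrite !mem_rev !mem_iota => Ha Hb; (repeat case: ifP => ?); lia.
  + apply: pairwise_iota_in => a b *; (repeat case: ifP => ?); lia.
  + apply: pairwise_iota_in => a b *; (repeat case: ifP => ?); lia.
Qed.

Lemma pw_allpairs (S T : eqType) (r1 : rel S) (r2 : rel T) s t :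
  pairwise r1 s -> pairwise r2 t ->
  pairwise (fun e e' => r1 e.1 e'.1 || ((e.1 == e'.1) && r2 e.2 e'.2)) [seq (x, y) | x <- s, y <- t].
Proof.
move=> + Ht; elim: s => [|x s IH] //= /andP[/allP Hx Hs].
rewrite pairwise_cat IH // andbT; apply/andP; split.
- apply/allrelP => u v /mapP[y _ ->] /allpairsP[[a b] [/= Ha _ ->]] /=.
  by rewrite Hx.
- rewrite pairwise_map; apply: sub_pairwise Ht => a b /= ->; by rewrite eqxx orbT.
Qed.

Lemma pw_cross n p q (d : diagram n) : 0 < p -> p <= q -> q <= n -> pairwise (lexle p) (cross p q d).
Proof.
move=> Hp Hpq Hq; rewrite /cross.
apply: (pairwise_flat (fun io => arcs d io.1 io.2)).
- by move=> e; rewrite /lexle eqxx leqnn orbT.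
- apply: sub_pairwise (pw_allpairs (pw_ins Hpq Hq) (pw_outs Hp Hpq Hq)) => e e' /=.
  by rewrite /lexle; case/orP => [->//|/andP[-> /ltnW ->]]; rewrite orbT.
Qed.

Lemma uniq_ap n p q : 0 < p -> p <= q -> q <= n -> uniq [seq (x, y) | x <- ins n p q, y <- outs n p q].
Proof.
move=> Hp Hpq Hq; apply: (pairwise_uniq _ (pw_allpairs (pw_ins Hpq Hq) (pw_outs Hp Hpq Hq))).
by move=> e; rewrite /= !ltnn andbF.

Qed.

Lemma mem_cross n p q (d : diagram n) e : e \in cross p q d ->
  [/\ e.1 \in ins n p q, e.2 \in outs n p q & 0 < arcs d e.1 e.2].
Proof.
rewrite /cross => /(mem_flat (f := fun io => arcs d io.1 io.2)) /andP[/allpairsP[[a b] [/= Ha Hb ->]] H].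
by split.
Qed.

Lemma count_cross n p q (d : diagram n) i o : 0 < p -> p <= q -> q <= n ->
  i \in ins n p q -> o \in outs n p q -> count_mem (i, o) (cross p q d) = arcs d i o.
Proof.
move=> Hp Hpq Hq Hi Ho; rewrite /cross (count_flat (fun io => arcs d io.1 io.2)).
rewrite count_uniq_mem ?uniq_ap //=.
have -> : (i, o) \in [seq (x, y) | x <- ins n p q, y <- outs n p q] by apply/allpairsP; exists (i, o).
by rewrite muln1.
Qed.

Lemma size_N1 n p q (d : diagram n) :
  size (map (refl p q) (rev (unzip1 (cross p q d)))) = size (unzip2 (cross p q d)).
Proof. by rewrite size_map size_rev !size_map. Qed.

Lemma unzipN1 n p q (d : diagram n) :
  unzip1 (newcross p q d) = map (refl p q) (rev (unzip1 (cross p q d))).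
Proof. by rewrite /newcross unzip1_zip // size_N1. Qed.

Lemma unzipN2 n p q (d : diagram n) : unzip2 (newcross p q d) = unzip2 (cross p q d).
Proof. by rewrite /newcross unzip2_zip // size_N1. Qed.

Lemma mem_N n p q (d : diagram n) x y : 0 < p -> p <= q -> q <= n ->
  (x, y) \in newcross p q d ->
  [/\ inside p q x, ~~ inside p q y, (exists o, (refl p q x, o) \in cross p q d)
    & (exists i, (i, y) \in cross p q d)].
Proof.
move=> Hp Hpq Hq H.
have hx : x \in unzip1 (newcross p q d) by apply: (map_f fst H).
have hy : y \in unzip2 (newcross p q d) by apply: (map_f snd H).
move: hx; rewrite unzipN1 => /mapP[i]; rewrite mem_rev => /mapP[[e1 e2] He ->] ->.
move: hy; rewrite unzipN2 => /mapP[[f1 f2] Hf ->] /=.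
have [Hi _ _] := mem_cross He; have [_ Ho _] := mem_cross Hf.
have Hi' : inside p q e1 by rewrite /inside; exact: (mem_ins Hpq Hq Hi).
have [_ [Hr Hrr]] := refl_in Hq Hi'.
split=> //.
- by move: (mem_outs Hpq Hq Ho); rewrite /inside /=; lia.
- by exists e2; rewrite Hrr.
- by exists f1.
Qed.

Lemma pos_mem (T : eqType) (z : T) s : 0 < count_mem z s -> z \in s.
Proof. by rewrite -has_count has_pred1. Qed.

Lemma pw_N n p q (d : diagram n) : 0 < p -> p <= q -> q <= n -> Inv d ->
  pairwise (fun u v => (val u.1 <= val v.1) && (ro p u.2 <= ro p v.2)) (newcross p q d).
Proof.
move=> Hp Hpq Hq Hinv; rewrite /newcross.
apply: (pairwise_zip (r1 := fun a b : 'I_n.+1 => val a <= val b) (r2 := fun a b => ro p a <= ro p b)).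
- rewrite pairwise_map pairwise_rev.
  apply: (sub_in_pairwise (P := [pred x | inside p q x]) (r := fun a b : 'I_n.+1 => val a <= val b)).
  + move=> a b; rewrite !inE /relpre /= => Ha Hb Hab.
    have [ra _] := refl_in Hq Ha; have [rb _] := refl_in Hq Hb.
    rewrite ra rb; lia.
  + apply/allP => x /mapP[e He ->]; have [Hi _ _] := mem_cross He.
    rewrite inE /inside; exact: (mem_ins Hpq Hq Hi).
  + rewrite pairwise_map; apply: sub_pairwise (pw_cross d Hp Hpq Hq) => e e'.
    rewrite /lexle /relpre /=; case/orP => [/ltnW //|/andP[/eqP -> _]]; exact: leqnn.
- rewrite pairwise_map.
  apply: (sub_in_pairwise (P := mem (cross p q d)) (r := lexle p)); last first.
  + exact: pw_cross.
  + by apply/allP.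
  move=> [i o] [i' o']; rewrite /relpre /lexle /= => He He'.
  case/orP => [Hii|/andP[_ //]].
  have [Hi Ho H1] := mem_cross He; have [Hi' Ho' H2] := mem_cross He'.
  move: (mem_ins Hpq Hq Hi) (mem_ins Hpq Hq Hi') (mem_outs Hpq Hq Ho) (mem_outs Hpq Hq Ho') => /= a1 a2 a3 a4.
  have b1 := ltn_ord o; have b2 := ltn_ord o'.
  rewrite leqNgt; apply/negP => Hlt; apply: (NC Hinv H1 H2); move: Hlt; rewrite /ro.
  (repeat case: ifP => ?); rewrite /=; lia.
Qed.

Lemma act_oo n p q (d : diagram n) a b : ~~ inside p q a -> ~~ inside p q b ->
  arcs (act_s p q d) a b = arcs d a b.
Proof. by move=> Ha Hb; rewrite /act_s /= (negbTE Ha) (negbTE Hb). Qed.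
Lemma act_ii n p q (d : diagram n) a b : inside p q a -> inside p q b ->
  arcs (act_s p q d) a b = arcs d (refl p q a) (refl p q b).
Proof. by move=> Ha Hb; rewrite /act_s /= Ha Hb. Qed.
Lemma act_io n p q (d : diagram n) a b : inside p q a -> ~~ inside p q b ->
  arcs (act_s p q d) a b = count_mem (a, b) (newcross p q d).
Proof. by move=> Ha Hb; rewrite /act_s /= Ha (negbTE Hb). Qed.
Lemma act_oi n p q (d : diagram n) a b : ~~ inside p q a -> inside p q b ->
  arcs (act_s p q d) a b = count_mem (b, a) (newcross p q d).
Proof. by move=> Ha Hb; rewrite /act_s /= Hb (negbTE Ha). Qed.


Lemma crossP n p q (d : diagram n) i o : 0 < p -> p <= q -> q <= n -> (i, o) \in cross p q d ->
  [/\ p <= i <= q, (o < p) || (q < o) & 0 < arcs d i o].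
Proof.
move=> Hp Hpq Hq /mem_cross[Hi Ho H]; split=> //.
- exact: (mem_ins Hpq Hq Hi).
- exact: (mem_outs Hpq Hq Ho).
Qed.


Lemma pwN_mem n p q (d : diagram n) : 0 < p -> p <= q -> q <= n -> Inv d ->
  forall u v, u \in newcross p q d -> v \in newcross p q d ->
  ((val u.1 <= val v.1) && (ro p u.2 <= ro p v.2)) || ((val v.1 <= val u.1) && (ro p v.2 <= ro p u.2)).
Proof.
move=> Hp Hpq Hq Hinv u v Hu Hv.
have Rr : reflexive (fun u v : 'I_n.+1 * 'I_n.+1 => (val u.1 <= val v.1) && (ro p u.2 <= ro p v.2)).
  by move=> w; rewrite !leqnn.
exact: (pairwise_mem Rr (pw_N Hp Hpq Hq Hinv) Hu Hv).
Qed.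

Lemma inv_act n p q (d : diagram n) : 0 < p -> p <= q -> q <= n -> Inv d -> Inv (act_s p q d).
Proof.
move=> Hp Hpq Hq Hinv; have Hinv' := Hinv; case: Hinv' => Hs Hn; split.
  move=> a b; rewrite /act_s /=; case: (inside p q a); case: (inside p q b) => //=.
move=> a c b e hac hcb hbe.
case: (posnP (arcs (act_s p q d) a b)) => [->|H1]; [by left|right].
case: (posnP (arcs (act_s p q d) c e)) => [//|H2]; exfalso.
have ba := ltn_ord a; have bc := ltn_ord c; have bb := ltn_ord b; have be := ltn_ord e.
case: (boolP (inside p q a)) => Ia; case: (boolP (inside p q c)) => Ic;
  case: (boolP (inside p q b)) => Ib; case: (boolP (inside p q e)) => Ie.
all: try by move: Ia Ic Ib Ie; rewrite /inside; lia.
all: have Ro := @refl_in n p q _ Hq.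
all: have Cr := @crossP n p q d _ _ Hp Hpq Hq.
all: have Mn := @mem_N n p q d _ _ Hp Hpq Hq.
all: have Pw := @pwN_mem n p q d Hp Hpq Hq Hinv.
-
  rewrite act_ii // in H1; rewrite act_ii // in H2.
  have [ra _] := Ro _ Ia; have [rb _] := Ro _ Ib; have [rc _] := Ro _ Ic; have [re _] := Ro _ Ie.
  apply: (NC Hinv H1 H2); rewrite ra rb rc re; move: Ia Ic Ib Ie; rewrite /inside; lia.
-
  rewrite act_ii // in H1; rewrite act_io // in H2; move/pos_mem: H2 => H2.
  have [_ _ [o Ho] _] := Mn _ _ H2; have [o1 o2 o3] := Cr _ _ Ho.
  have [ra _] := Ro _ Ia; have [rb _] := Ro _ Ib; have [rc _] := Ro _ Ic; have bo := ltn_ord o.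
  apply: (NC Hinv H1 o3); rewrite ra rb; move: o1; rewrite rc; move: Ia Ic Ib Ie; rewrite /inside; lia.
-
  rewrite act_io // in H1; rewrite act_io // in H2; move/pos_mem: H1 => H1; move/pos_mem: H2 => H2.
  have := Pw _ _ H1 H2; rewrite /ro /=; move: Ia Ic Ib Ie; rewrite /inside; (repeat case: ifP => ?); lia.
-
  rewrite act_io // in H1; rewrite act_oo // in H2; move/pos_mem: H1 => H1.
  have [_ _ _ [i Hi]] := Mn _ _ H1; have [i1 i2 i3] := Cr _ _ Hi.
  apply: (NC Hinv i3 H2); move: Ia Ic Ib Ie; rewrite /inside; lia.
-
  rewrite act_oi // in H1; rewrite act_ii // in H2; move/pos_mem: H1 => H1.
  have [_ _ [o Ho] _] := Mn _ _ H1; have [o1 o2 o3] := Cr _ _ Ho.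
  have [re _] := Ro _ Ie; have [rb _] := Ro _ Ib; have [rc _] := Ro _ Ic; have bo := ltn_ord o.
  apply: (NC Hinv H2 o3); rewrite rc re; move: o1; rewrite rb; move: Ia Ic Ib Ie; rewrite /inside; lia.
-
  rewrite act_oi // in H1; rewrite act_io // in H2; move/pos_mem: H1 => H1; move/pos_mem: H2 => H2.
  have := Pw _ _ H1 H2; rewrite /ro /=; move: Ia Ic Ib Ie; rewrite /inside; (repeat case: ifP => ?); lia.
-
  rewrite act_oo // in H1; rewrite act_io // in H2; move/pos_mem: H2 => H2.
  have [_ _ _ [i Hi]] := Mn _ _ H2; have [i1 i2 i3] := Cr _ _ Hi.
  apply: (NC Hinv H1 i3); move: Ia Ic Ib Ie; rewrite /inside; lia.
-
  rewrite act_oi // in H1; rewrite act_oi // in H2; move/pos_mem: H1 => H1; move/pos_mem: H2 => H2.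
  have := Pw _ _ H1 H2; rewrite /ro /=; move: Ia Ic Ib Ie; rewrite /inside; (repeat case: ifP => ?); lia.
-
  rewrite act_oi // in H1; rewrite act_oo // in H2; move/pos_mem: H1 => H1.
  have [_ _ _ [i Hi]] := Mn _ _ H1; have [i1 i2 i3] := Cr _ _ Hi.
  apply: (NC Hinv i3 H2); move: Ia Ic Ib Ie; rewrite /inside; lia.
-
  rewrite act_oo // in H1; rewrite act_oi // in H2; move/pos_mem: H2 => H2.
  have [_ _ _ [i Hi]] := Mn _ _ H2; have [i1 i2 i3] := Cr _ _ Hi.
  apply: (NC Hinv H1 i3); move: Ia Ic Ib Ie; rewrite /inside; lia.
-
  rewrite act_oo // in H1; rewrite act_oo // in H2.
  apply: (NC Hinv H1 H2); move: Ia Ic Ib Ie; rewrite /inside; lia.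
Qed.

Definition fk n (d : diagram n) k := arcs d (inord k) (inord (k.+1 %% n.+1)).

Lemma fk_n n (d : diagram n) : fk d n = arcs d ord_max ord0.
Proof.
rewrite /fk modnn; congr (arcs d _ _); apply: val_inj; rewrite /= inordK //.
Qed.

Lemma bt_le n (d : diagram n) k : k < n.+1 -> border_thickness d <= fk d k.
Proof.
move=> Hk; rewrite /border_thickness; apply: foldr_min_le; rewrite inE; apply/orP; right.
by apply/mapP; exists k; rewrite // mem_iota.
Qed.

Lemma bt_ex n (d : diagram n) : exists2 k, k < n.+1 & border_thickness d = fk d k.
Proof.
rewrite /border_thickness.
have := foldr_min_ex (arcs d ord_max ord0) [seq arcs d (inord k) (inord (k.+1 %% n.+1)) | k <- iota 0 n.+1].
rewrite inE => /orP[/eqP->|/mapP[k Hk ->]].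
- by exists n => //; rewrite fk_n.
- by exists k => //; move: Hk; rewrite mem_iota.
Qed.

Lemma bt_ge n (d : diagram n) m : (forall k, k < n.+1 -> m <= fk d k) -> m <= border_thickness d.
Proof.
move=> H; apply: foldr_min_ge; first by rewrite -fk_n; apply: H.
apply/allP => y /mapP[k Hk ->]; apply: H; move: Hk; rewrite mem_iota; lia.
Qed.

Lemma nx_val n k : k < n.+1 -> k.+1 %% n.+1 = if k < n then k.+1 else 0.
Proof.
move=> Hk; case: ifP => H; first by rewrite modn_small.
have -> : k = n by lia.
by rewrite modnn.
Qed.

Lemma refl_inord n p q k : p <= k <= q -> q <= n -> @refl n p q (inord k) = inord (p + q - k).
Proof. by move=> H Hq; rewrite /refl inside_inord ?H //=; [rewrite inordK //; lia | lia]. Qed.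

Lemma flat_last (T : eqType) (f : T -> nat) X z :
  flatten [seq nseq (f w) w | w <- X ++ [:: z]] = flatten [seq nseq (f w) w | w <- X] ++ nseq (f z) z.
Proof. by rewrite map_cat flatten_cat /= cats0. Qed.

Lemma ap_last (S T : Type) (s : seq S) (t : seq T) x y :
  exists X, [seq (a, b) | a <- s ++ [:: x], b <- t ++ [:: y]] = X ++ [:: (x, y)].
Proof.
exists ([seq (a, b) | a <- s, b <- t ++ [:: y]] ++ [seq (x, b) | b <- t]).
by rewrite allpairs_cat allpairs_cons /= cats0 map_cat /= -catA.
Qed.

Lemma cross_pre n p q (d : diagram n) : 0 < p -> p <= q -> q <= n ->
  exists L1, cross p q d = nseq (arcs d (inord p) (inord p.-1)) (inord p, inord p.-1) ++ L1.
Proof.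
move=> Hp Hpq Hq.
have E1 : iota p (q - p).+1 = p :: iota p.+1 (q - p) by [].
have E2 : rev (iota 0 p) = p.-1 :: rev (iota 0 p.-1).
  case: p Hp {Hpq E1} => [//|p' _]; have -> : iota 0 p'.+1 = iota 0 p' ++ [:: p'] by rewrite -addn1 iotaD.
  by rewrite rev_cat.
rewrite /cross /ins /outs E1 E2 cat_cons !map_cons.
by eexists; reflexivity.
Qed.

Lemma cross_suf n p q (d : diagram n) : 0 < p -> p <= q -> q <= n ->
  exists L2, cross p q d = L2 ++ nseq (arcs d (inord q) (inord (q.+1 %% n.+1))) (inord q, inord (q.+1 %% n.+1)).
Proof.
move=> Hp Hpq Hq.
have E1 : iota p (q - p).+1 = iota p (q - p) ++ [:: q].
  by rewrite -addn1 iotaD subnKC.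
have [S E2] : exists S, rev (iota 0 p) ++ rev (iota q.+1 (n - q)) = S ++ [:: q.+1 %% n.+1].
  case: (ltngtP q n) => Hqn; last 1 first.
  - rewrite Hqn subnn /= cats0 modnn; case: p Hp {Hpq E1} => // p' _.
    by exists (rev (iota 1 p')); rewrite /= rev_cons cats1.
  - have -> : n - q = (n - q).-1.+1 by lia.
    exists (rev (iota 0 p) ++ rev (iota q.+2 (n - q).-1)).
    by rewrite /= rev_cons -cats1 catA modn_small.
  - lia.
have EI : ins n p q = [seq inord i | i <- iota p (q - p)] ++ [:: inord q] by rewrite /ins E1 map_cat.
have EO : outs n p q = [seq inord i | i <- S] ++ [:: inord (q.+1 %% n.+1)] by rewrite /outs E2 map_cat.
rewrite /cross EI EO.
have [X ->] := ap_last [seq inord i | i <- iota p (q - p)] [seq inord i | i <- S] (inord q : 'I_n.+1) (inord (q.+1 %% n.+1) : 'I_n.+1).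
rewrite (flat_last (fun io => arcs d io.1 io.2)).
by eexists; reflexivity.
Qed.

Lemma inord_ins n p q k : p <= k <= q -> q <= n -> (inord k : 'I_n.+1) \in ins n p q.
Proof. by move=> H Hq; apply/mapP; exists k; rewrite // mem_iota; lia. Qed.

Lemma inord_outs n p q k : k <= n -> (k < p) || (q < k) -> (inord k : 'I_n.+1) \in outs n p q.
Proof. by move=> H1 H2; apply/mapP; exists k; rewrite // mem_cat !mem_rev !mem_iota; lia. Qed.

Lemma N_count2 n p q (d : diagram n) x y x0 : 0 < p -> p <= q -> q <= n ->
  (forall e, e \in cross p q d -> e.2 = y -> e.1 = x0) -> x0 \in ins n p q -> y \in outs n p q ->
  count_mem (x, y) (newcross p q d) <= arcs d x0 y.
Proof.
move=> Hp Hpq Hq H Hx0 Hy.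
apply: (@leq_trans (count (fun e => e.2 == y) (newcross p q d))).
  by apply: sub_count => e /eqP ->.
have -> : count (fun e => e.2 == y) (newcross p q d) = count (pred1 y) (unzip2 (newcross p q d)).
  by rewrite count_map.
rewrite unzipN2 count_map -(count_cross d Hp Hpq Hq Hx0 Hy).
rewrite (eq_in_count (a2 := pred1 (x0, y))) // => [[e1 e2]] He /=.
apply/eqP/eqP => [E|[_ ->] //]; rewrite -E; congr pair; exact: (H (e1, e2) He E).
Qed.

Lemma N_count1 n p q (d : diagram n) x y o0 : 0 < p -> p <= q -> q <= n -> inside p q x ->
  (forall e, e \in cross p q d -> e.1 = refl p q x -> e.2 = o0) -> refl p q x \in ins n p q -> o0 \in outs n p q ->
  count_mem (x, y) (newcross p q d) <= arcs d (refl p q x) o0.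
Proof.
move=> Hp Hpq Hq Hx H Hx0 Hy.
apply: (@leq_trans (count (fun e => e.1 == x) (newcross p q d))).
  by apply: sub_count => e /eqP ->.
have -> : count (fun e => e.1 == x) (newcross p q d) = count (pred1 x) (unzip1 (newcross p q d)).
  by rewrite count_map.
rewrite unzipN1 count_map count_rev -(count_cross d Hp Hpq Hq Hx0 Hy).
have [_ [_ Rx]] := refl_in Hq Hx.
rewrite count_map; apply/eq_leq; apply: eq_in_count => [[e1 e2]] He /=.
have [He1 _ _] := mem_cross He.
have Hi : inside p q e1 by rewrite /inside; exact: (mem_ins Hpq Hq He1).
have [_ [_ Re]] := refl_in Hq Hi.
apply/eqP/eqP => [E|[E _]].
- have E1 : e1 = refl p q x by rewrite -E Re.
  by have := H (e1, e2) He E1; rewrite /= => ->; rewrite E1.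
- by rewrite E Rx.
Qed.

Lemma fk_oo n p q (d : diagram n) k : 0 < p -> p <= q -> q <= n -> k < n.+1 -> (k.+1 < p) || (q < k) ->
  fk (act_s p q d) k = fk d k.
Proof.
move=> Hp Hpq Hq Hk Hc; rewrite /fk (nx_val Hk) act_oo //.
- by rewrite inside_inord; lia.
- rewrite inside_inord; case: ifP => ?; lia.
Qed.

Lemma fk_ii n p q (d : diagram n) k : Inv d -> p <= k -> k < q -> q <= n ->
  fk (act_s p q d) k = fk d (p + q - k.+1).
Proof.
move=> [Hs _] H1 H2 Hq; rewrite /fk !modn_small; try lia.
rewrite act_ii ?inside_inord; try lia.
rewrite !refl_inord; try lia.
rewrite Hs; congr (arcs d (inord _) (inord _)); lia.
Qed.


Ltac slia := repeat match goal with | H : is_true (_ \in _) |- _ => clear H end; lia.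

Lemma step n p q (d : diagram n) : 0 < p -> p < q -> q <= n -> Inv d ->
  border_thickness (act_s p q d) = border_thickness d.
Proof.
move=> Hp Hpq' Hq Hinv; have Hpq : p <= q := ltnW Hpq'.
have Hinv' := Hinv; case: Hinv' => Hs _.
set q1 := q.+1 %% n.+1.
have Hq1 : (q < n /\ q1 = q.+1) \/ (q = n /\ q1 = 0).
  rewrite /q1; case: (ltngtP q n) => h.
  - by left; split => //; rewrite modn_small.
  - slia.
  - by right; split => //; rewrite h modnn.
have Hq1n : q1 <= n by slia.
have vp : (inord p : 'I_n.+1) = p :> nat by rewrite inordK; slia.
have vp1 : (inord p.-1 : 'I_n.+1) = p.-1 :> nat by rewrite inordK; slia.
have vq : (inord q : 'I_n.+1) = q :> nat by rewrite inordK; slia.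
have vq1 : (inord (q1) : 'I_n.+1) = q1 :> nat by rewrite inordK; slia.
have Ip : inside p q (inord p : 'I_n.+1) by rewrite inside_inord; slia.
have Iq : inside p q (inord q : 'I_n.+1) by rewrite inside_inord; slia.
have Op1 : ~~ inside p q (inord p.-1 : 'I_n.+1) by rewrite inside_inord; slia.
have Oq1 : ~~ inside p q (inord (q1) : 'I_n.+1).
  by rewrite inside_inord //; slia.
have insp : (inord p : 'I_n.+1) \in ins n p q by apply: inord_ins; slia.
have insq : (inord q : 'I_n.+1) \in ins n p q by apply: inord_ins; slia.
have outp1 : (inord p.-1 : 'I_n.+1) \in outs n p q by apply: inord_outs; slia.
have outq1 : (inord (q1) : 'I_n.+1) \in outs n p q.
  by apply: inord_outs => //; slia.
have fA : fk d p.-1 = arcs d (inord p) (inord p.-1).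
  rewrite /fk (_ : p.-1.+1 %% n.+1 = p); first by rewrite Hs.
  rewrite modn_small; slia.
have nA : fk (act_s p q d) p.-1 = count_mem (inord p, inord p.-1) (newcross p q d).
  rewrite /fk (_ : p.-1.+1 %% n.+1 = p); first by rewrite act_oi.
  rewrite modn_small; slia.
have nC : fk (act_s p q d) q = count_mem (inord q, inord (q1)) (newcross p q d).
  by rewrite /fk act_io.
have fC : fk d q = arcs d (inord q) (inord q1) by [].
have Eq1 : q.+1 %% n.+1 = q1 by [].
clearbody q1.
have rq : refl p q (inord q) = inord p :> 'I_n.+1.
  by rewrite refl_inord; try slia; congr inord; slia.
have rp : refl p q (inord p) = inord q :> 'I_n.+1.
  by rewrite refl_inord; try slia; congr inord; slia.
have [L1 E1] := cross_pre d Hp Hpq Hq.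
have [L2 E2] := cross_suf d Hp Hpq Hq.
rewrite Eq1 in E2.
set A := arcs d (inord p) (inord p.-1) in fA E1.
set C := arcs d (inord q) (inord (q1)) in E2.
have LB1 : minn A C <= count_mem (inord p, inord p.-1) (newcross p q d).
  have U2 : unzip2 (cross p q d) = nseq A (inord p.-1) ++ unzip2 L1.
    by rewrite E1 /unzip2 map_cat map_nseq.
  have U1 : map (refl p q) (rev (unzip1 (cross p q d))) = nseq C (inord p) ++ map (refl p q) (rev (unzip1 L2)).
    by rewrite E2 /unzip1 map_cat map_nseq rev_cat rev_nseq map_cat map_nseq rq.
  rewrite /newcross U1 U2; exact: count_zip_pre.
have LB2 : minn A C <= count_mem (inord q, inord (q1)) (newcross p q d).
  have U2 : unzip2 (cross p q d) = unzip2 L2 ++ nseq C (inord (q1)).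
    by rewrite E2 /unzip2 map_cat map_nseq.
  have U1 : map (refl p q) (rev (unzip1 (cross p q d))) = map (refl p q) (rev (unzip1 L1)) ++ nseq A (inord q).
    by rewrite E1 /unzip1 map_cat map_nseq rev_cat rev_nseq map_cat map_nseq rp.
  have Hsz := size_N1 p q d; rewrite U1 U2 in Hsz.
  rewrite /newcross U1 U2 minnC; exact: count_zip_suf.
have btA : border_thickness d <= A by rewrite -fA; apply: bt_le; slia.
have btC : border_thickness d <= C by rewrite /C -fC; apply: bt_le; slia.
apply/eqP; rewrite eqn_leq; apply/andP; split; last first.
  apply: bt_ge => k Hk.
  case: (boolP ((k.+1 < p) || (q < k))) => [Ho|Ho].
    by rewrite fk_oo //; apply: bt_le.
  case: (boolP (k.+1 == p)) => [/eqP Ek|Ek].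
    have -> : k = p.-1 by slia.
    rewrite nA; apply: leq_trans LB1; by rewrite leq_min btA btC.
  case: (boolP (k == q)) => [/eqP ->|Eq].
    rewrite nC; apply: leq_trans LB2; by rewrite leq_min btA btC.
  rewrite fk_ii //; try slia; apply: bt_le; slia.
have [k0 Hk0 ->] := bt_ex d.
suff [k Hk Hle] : exists2 k, k < n.+1 & fk (act_s p q d) k <= fk d k0.
  by apply: leq_trans (bt_le _ Hk) Hle.
have Cr := @crossP n p q d _ _ Hp Hpq Hq.
case: (boolP ((k0.+1 < p) || (q < k0))) => [Ho|Ho].
  by exists k0 => //; rewrite fk_oo.
case: (boolP (k0.+1 == p)) => [/eqP Ek|Ek].
  have -> : k0 = p.-1 by slia.
  rewrite fA.
  case: (boolP (all (fun e => (e.2 == inord p.-1) ==> (e.1 == inord p)) (cross p q d))) => Hall.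
    exists p.-1; first slia.
    rewrite nA; apply: N_count2 => // e He E.
    by move/allP: Hall => /(_ e He); rewrite E eqxx /= => /eqP.
  exists q; first slia.
  rewrite nC; apply: (@leq_trans (arcs d (refl p q (inord q)) (inord p.-1))); last by rewrite rq.
  apply: N_count1 => //; last by rewrite rq.
  move/allPn: Hall => [[i o] He] /=; rewrite negb_imply => /andP[/eqP Eo Ei].
  move=> [i' o'] He' /=; rewrite rq => Ei'.
  apply/eqP; apply/negPn/negP => Ho'.
  have [i1 i2 i3] := Cr _ _ He; have [j1 j2 j3] := Cr _ _ He'.
  rewrite Eo in i3; rewrite Ei' in j3.
  have vi : (i : nat) != p by apply/eqP => h; move: Ei; rewrite (_ : i = inord p) ?eqxx //; apply: val_inj; rewrite /= vp.
  have vo : (o' : nat) != p.-1 by apply/eqP => h; move: Ho'; rewrite (_ : o' = inord p.-1) ?eqxx //; apply: val_inj; rewrite /= vp1.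
  have bo := ltn_ord o'.
  rewrite Ei' vp in j1.
  apply: (NC Hinv i3 j3); rewrite vp vp1; slia.
case: (boolP (k0 == q)) => [/eqP ->|Eq]; last first.
  exists (p + q - k0.+1); first slia.
  rewrite fk_ii //; try slia.
  by rewrite (_ : p + q - (p + q - k0.+1).+1 = k0) //; slia.
rewrite fC.
case: (boolP (all (fun e => (e.2 == inord (q1)) ==> (e.1 == inord q)) (cross p q d))) => Hall.
  exists q; first slia.
  rewrite nC; apply: N_count2 => // e He E.
  by move/allP: Hall => /(_ e He); rewrite E eqxx /= => /eqP.
exists p.-1; first slia.
rewrite nA; apply: (@leq_trans (arcs d (refl p q (inord p)) (inord (q1)))); last by rewrite rp.
apply: N_count1 => //; last by rewrite rp.
move/allPn: Hall => [[i o] He] /=; rewrite negb_imply => /andP[/eqP Eo Ei].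
move=> [i' o'] He' /=; rewrite rp => Ei'.
apply/eqP; apply/negPn/negP => Ho'.
have [i1 i2 i3] := Cr _ _ He; have [j1 j2 j3] := Cr _ _ He'.
rewrite Eo in i3; rewrite Ei' in j3.
have vi : (i : nat) != q by apply/eqP => h; move: Ei; rewrite (_ : i = inord q) ?eqxx //; apply: val_inj; rewrite /= vq.
have vo : (o' : nat) != q1 by apply/eqP => h; move: Ho'; rewrite (_ : o' = inord (q1)) ?eqxx //; apply: val_inj; rewrite /= vq1.
have bo := ltn_ord o'.
apply: (NC Hinv i3 j3); rewrite vq vq1; slia.
Qed.


Theorem mainTheorem4 (n : nat) (l : 'I_n -> nat) (linf : nat) (x : diagram n)
    (w : seq (nat * nat)) :
  is_arc_diagram l linf x -> all (gen_ok n) w ->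
  border_thickness (act_word w x) = border_thickness x.
Proof.
move=> [_ Hs _ Hn _] Hw.
have Hinv : Inv x by split.
suff: Inv (act_word w x) /\ border_thickness (act_word w x) = border_thickness x by case.
elim: w Hw => [|[p q] w IH] /=; first by [].
move=> /andP[Hg Hw]; have [Hi Hb] := IH Hw.
rewrite /gen_ok /= in Hg.
split; first by apply: inv_act => //; lia.
rewrite step //; lia.
Qed.
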